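(* Let $\mathcal A$ be a linearly ordered $\mathbf{IUL}_\omega$-algebra. Let $B\subseteq A$ be such that $\{e,f,\bot,\top\}\subseteq B$ and $\neg b\in B$ for all $b\in B$. Let $M$, $\bar D$, $D$ and the operations be as described in the context. Then: (i) $(b]=\sim\sim(b]$ for all $b\in B$; (ii) $(a\mapsto b]=\sim\sim(a\mapsto b]$ for all $(a\mapsto b]\in\bar D$; (iii) $X=\sim\sim X$ for all $X\in D$; (iv) $\mathcal D=\langle D,\cdot^D,\to^D,\vee^D,\wedge^D,e^D,f^D,\bot^D,\top^D\rangle$ is an $\mathbf{IUL}_\omega$-algebra.
   Context: A $\mathbf{UL}$-algebra is a structure $\langle A,\wedge,\vee,\cdot,\to,e,f,\bot,\top\rangle$ such that: - it is a bounded lattice; - $\langle A,\cdot,e\rangle$ is a commutative monoid; - $xy\le z$ iff $y\le x\to z$; - for all $x,y,u,v$: $\lambda_u((x\vee y)\to x)\vee\lambda_v((x\vee y)\to y)=e$, where $\lambda_a(b)=(a\to ba)\wedge e$. An $\mathbf{IUL}_\omega$-algebra is a $\mathbf{UL}$-algebra with $\neg\neg x=x$ (where $\neg x=x\to f$) and $x\to e=x^2\to e$ for all $x$. Construction. $M$ is the submonoid of $\langle A,\cdot,e\rangle$ generated by $B$. For $a\in M$ and $b\in B$, put $(a\mapsto b]=\{c\in M: ac\le b\}$. Let $\bar D=\{(a\mapsto b]:a\in M,b\in B\}$ and $D=\{\bigcap\chi:\chi\subseteq\bar D\}$, with the empty intersection equal to $M$. For $X\subseteq M$, $C(X)$ is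 the intersection of all members of $\bar D$ containing $X$. For $b\in A$, $(b]=\{c\in M:c\le b\}$. For $X,Y\subseteq M$ and $X_i\subseteq M$: - $X\cdot^DY=C(\{xy:x\in X,y\in Y\})$; - $X\to^DY=\{a\in M: Xa\subseteq Y\}$, where $Xa=\{xa:x\in X\}$; - $\bigvee^D_iX_i=C(\bigcup_iX_i)$ and $\bigwedge^D_iX_i=\bigcap_iX_i$; - $e^D=(e]$, $f^D=(f]$, $\bot^D=(\bot]$, $\top^D=(\top]=M$; - $\sim X=X\to^D(f]$. *)

(* Defs.v *)
Set Implicit Arguments.

Record ulsig (T : Type) := ULSig {
  mt : T -> T -> T;
  jn : T -> T -> T;
  ml : T -> T -> T;
  im : T -> T -> T;
  ue : T; uf : T; ub : T; ut : T }.
Arguments ULSig {T}.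

Section Alg.
Context {T : Type} (s : ulsig T).

Definition le (x y : T) : Prop := mt s x y = x.

Definition lam (a b : T) : T := mt s (im s a (ml s b a)) (ue s).

Definition neg (x : T) : T := im s x (uf s).

Definition is_UL : Prop :=
  (forall x y z, mt s x (mt s y z) = mt s (mt s x y) z) /\
  (forall x y z, jn s x (jn s y z) = jn s (jn s x y) z) /\
  (forall x y, mt s x y = mt s y x) /\
  (forall x y, jn s x y = jn s y x) /\
  (forall x y, mt s x (jn s x y) = x) /\
  (forall x y, jn s x (mt s x y) = x) /\
  (forall x, jn s (ub s) x = x) /\
  (forall x, mt s (ut s) x = x) /\
  (forall x y z, ml s x (ml s y z) = ml s (ml s x y) z) /\
  (forall x y, ml s x y = ml s y x) /\
  (forall x, ml s (ue s) x = x) /\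
  (forall x y z, le (ml s x y) z <-> le y (im s x z)) /\
  (* prelinearity *)
  (forall x y u v,
     jn s (lam u (im s (jn s x y) x)) (lam v (im s (jn s x y) y)) = ue s).

Definition is_IUL : Prop :=
  is_UL /\
  (forall x, neg (neg x) = x) /\
  (forall x, im s x (ue s) = im s (ml s x x) (ue s)).

Definition linear : Prop := forall x y, le x y \/ le y x.
End Alg.

Section Constr.
Context {A : Type} (s : ulsig A) (B : A -> Prop).

Definition seteq (X Y : A -> Prop) : Prop := forall c, X c <-> Y c.

Inductive inM : A -> Prop :=
  | inM_e : inM (ue s)
  | inM_mul : forall b a, B b -> inM a -> inM (ml s b a).

Definition arr (a b : A) : A -> Prop := fun c => inM c /\ le s (ml s a c) b.

Definition inDbar (X : A -> Prop) : Prop :=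
  exists a b, inM a /\ B b /\ seteq X (arr a b).

(** members of D: intersections of subfamilies of Dbar (empty one = M) *)
Definition inD (X : A -> Prop) : Prop :=
  exists chi : (A -> Prop) -> Prop,
    (forall Y, chi Y -> inDbar Y) /\
    seteq X (fun c => inM c /\ forall Y, chi Y -> Y c).

Definition Ccl (X : A -> Prop) : A -> Prop :=
  fun c => inM c /\ forall Y, inDbar Y -> (forall x, X x -> Y x) -> Y c.

Definition down (b : A) : A -> Prop := fun c => inM c /\ le s c b.

Definition mulD (X Y : A -> Prop) : A -> Prop :=
  Ccl (fun z => exists x y, X x /\ Y y /\ z = ml s x y).
Definition impD (X Y : A -> Prop) : A -> Prop :=
  fun a => inM a /\ forall x, X x -> Y (ml s x a).
Definition joinD (X Y : A -> Prop) : A -> Prop :=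
  Ccl (fun z => X z \/ Y z).
Definition meetD (X Y : A -> Prop) : A -> Prop :=
  fun z => X z /\ Y z.
Definition eD := down (ue s).
Definition fD := down (uf s).
Definition botD := down (ub s).
Definition topD := down (ut s).

Definition simD (X : A -> Prop) : A -> Prop := impD X fD.

Definition Dty : Type := { X : A -> Prop | inD X }.
End Constr.

(* Main.v *)
Require Import Defs.
From Stdlib Require Import Classical FunctionalExtensionality PropExtensionality ProofIrrelevance.

Lemma U_mA {A} {s : ulsig A} : is_UL s -> forall x y z, mt s x (mt s y z) = mt s (mt s x y) z.
Proof. intros (h&_). exact h. Qed.
Lemma U_jA {A} {s : ulsig A} : is_UL s -> forall x y z, jn s x (jn s y z) = jn s (jn s x y) z.
Proof. intros (_&h&_). exact h. Qed.
Lemma U_mC {A} {s : ulsig A} : is_UL s -> forall x y, mt s x y = mt s y x.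
Proof. intros (_&_&h&_). exact h. Qed.
Lemma U_jC {A} {s : ulsig A} : is_UL s -> forall x y, jn s x y = jn s y x.
Proof. intros (_&_&_&h&_). exact h. Qed.
Lemma U_mabs {A} {s : ulsig A} : is_UL s -> forall x y, mt s x (jn s x y) = x.
Proof. intros (_&_&_&_&h&_). exact h. Qed.
Lemma U_jabs {A} {s : ulsig A} : is_UL s -> forall x y, jn s x (mt s x y) = x.
Proof. intros (_&_&_&_&_&h&_). exact h. Qed.
Lemma U_jbot {A} {s : ulsig A} : is_UL s -> forall x, jn s (ub s) x = x.
Proof. intros (_&_&_&_&_&_&h&_). exact h. Qed.
Lemma U_mtop {A} {s : ulsig A} : is_UL s -> forall x, mt s (ut s) x = x.
Proof. intros (_&_&_&_&_&_&_&h&_). exact h. Qed.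
Lemma U_mlA {A} {s : ulsig A} : is_UL s -> forall x y z, ml s x (ml s y z) = ml s (ml s x y) z.
Proof. intros (_&_&_&_&_&_&_&_&h&_). exact h. Qed.
Lemma U_mlC {A} {s : ulsig A} : is_UL s -> forall x y, ml s x y = ml s y x.
Proof. intros (_&_&_&_&_&_&_&_&_&h&_). exact h. Qed.
Lemma U_mlE {A} {s : ulsig A} : is_UL s -> forall x, ml s (ue s) x = x.
Proof. intros (_&_&_&_&_&_&_&_&_&_&h&_). exact h. Qed.
Lemma U_res {A} {s : ulsig A} : is_UL s -> forall x y z, le s (ml s x y) z <-> le s y (im s x z).
Proof. intros (_&_&_&_&_&_&_&_&_&_&_&h&_). exact h. Qed.

Lemma le_refl {A} {s : ulsig A} (H : is_UL s) x : le s x x.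
Proof. unfold le. pose proof (U_mabs H x (mt s x x)) as E. rewrite (U_jabs H x x) in E. exact E. Qed.
Lemma le_trans {A} {s : ulsig A} (H : is_UL s) x y z : le s x y -> le s y z -> le s x z.
Proof. unfold le. intros h1 h2. rewrite <- h1 at 1. rewrite <- (U_mA H). rewrite h2. exact h1. Qed.
Lemma le_bot {A} {s : ulsig A} (H : is_UL s) x : le s (ub s) x.
Proof. unfold le. pose proof (U_mabs H (ub s) x) as E. rewrite (U_jbot H) in E. exact E. Qed.
Lemma le_top {A} {s : ulsig A} (H : is_UL s) x : le s x (ut s).
Proof. unfold le. rewrite (U_mC H). apply (U_mtop H). Qed.
Lemma mono {A} {s : ulsig A} (H : is_UL s) z x y : le s x y -> le s (ml s z x) (ml s z y).
Proof. intro h. apply (U_res H). apply le_trans with y; auto. apply (U_res H). apply le_refl; auto. Qed.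
Lemma ml_e_r {A} {s : ulsig A} (H : is_UL s) x : ml s x (ue s) = x.
Proof. rewrite (U_mlC H). apply (U_mlE H). Qed.

Definition sub {A} (X Y : A -> Prop) := forall c, X c -> Y c.
Lemma sext {A} (X Y : A -> Prop) : seteq X Y -> X = Y.
Proof. intro h. apply functional_extensionality; intro c. apply propositional_extensionality. apply h. Qed.

Lemma inM_mul2 {A} {s : ulsig A} {B : A -> Prop} (H : is_UL s) x y :
  inM s B x -> inM s B y -> inM s B (ml s x y).
Proof. induction 1; intro hy. rewrite (U_mlE H); auto. rewrite <- (U_mlA H). constructor; auto. Qed.

Lemma inM_B {A} {s : ulsig A} {B : A -> Prop} (H : is_UL s) b : B b -> inM s B b.
Proof. intro hb. rewrite <- (ml_e_r H b). constructor; auto. constructor. Qed.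

Lemma D_M {A} {s : ulsig A} {B : A -> Prop} X c : inD s B X -> X c -> inM s B c.
Proof. intros (chi & hchi & hX) hc. exact (proj1 (proj1 (hX c) hc)). Qed.

Lemma Dbar_M {A} {s : ulsig A} {B : A -> Prop} X c : inDbar s B X -> X c -> inM s B c.
Proof. intros (a&b&ha&hb&hX) hc. apply hX in hc. destruct hc; auto. Qed.

Lemma D_down {A} {s : ulsig A} {B : A -> Prop} (H : is_UL s) X x c :
  inD s B X -> X x -> inM s B c -> le s c x -> X c.
Proof.
  intros (chi&hchi&hX) hx hc hle. apply hX. split; auto. intros Y hY.
  destruct (hchi Y hY) as (a&b&ha&hb&hY'). apply hY'. split; auto.
  apply hX in hx. destruct hx as [hxM hx]. specialize (hx Y hY). apply hY' in hx.
  destruct hx as [_ hx]. eapply le_trans; [exact H| apply mono; [exact H|exact hle] | exact hx].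
Qed.

Lemma Dbar_D {A} {s : ulsig A} {B : A -> Prop} X : inDbar s B X -> inD s B X.
Proof.
  intro h. exists (fun Y => Y = X). split. intros Y ->; auto.
  intro c; split. intro hc; split. eapply Dbar_M; eauto. intros Y ->; auto.
  intros [_ h2]; apply h2; reflexivity.
Qed.

Lemma Ccl_D {A} {s : ulsig A} {B : A -> Prop} W : inD s B (Ccl s B W).
Proof.
  exists (fun Y => inDbar s B Y /\ sub W Y). split. intros Y [h _]; exact h.
  intro c. unfold Ccl. split; intros [h1 h2]; split; auto.
  intros Y [hY hW]; apply h2; auto. intros Y hY hW; apply h2; split; auto.
Qed.

Lemma Ccl_incl {A} {s : ulsig A} {B : A -> Prop} W : sub W (inM s B) -> forall c, W c -> Ccl s B W c.
Proof. intros hM c hc; split; auto. Qed.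

Lemma Ccl_mono {A} {s : ulsig A} {B : A -> Prop} W V : sub W V -> sub (Ccl s B W) (Ccl s B V).
Proof. intros h c [hc h2]; split; auto. intros Y hY hV; apply h2; auto. Qed.

Lemma Ccl_min {A} {s : ulsig A} {B : A -> Prop} X W : inD s B X -> sub W X -> sub (Ccl s B W) X.
Proof.
  intros (chi&h1&h2) hW c [hc h3]. apply h2. split; auto. intros Y hY. apply h3. apply h1; auto.
  intros x hx. apply hW in hx. apply h2 in hx. apply (proj2 hx); auto.
Qed.

Lemma Ccl_id {A} {s : ulsig A} {B : A -> Prop} X W : inD s B X -> sub W X -> sub X W -> Ccl s B W = X.
Proof.
  intros hX h1 h2. apply sext; intro c; split. apply Ccl_min; auto.
  intro hc. apply Ccl_incl; auto. intros d hd. eapply D_M; eauto.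
Qed.

Lemma impD_D {A} {s : ulsig A} {B : A -> Prop} (H : is_UL s) X T :
  sub X (inM s B) -> inD s B T -> inD s B (impD s B X T).
Proof.
  intros hX (chi & h1 & h2).
  exists (fun Z => exists x a b Y, X x /\ chi Y /\ inM s B a /\ B b /\ seteq Y (arr s B a b)
                    /\ Z = arr s B (ml s a x) b).
  split.
  - intros Z (x&a&b&Y&hx&hY&ha&hb&hYe&->). exists (ml s a x), b. split.
    apply inM_mul2; auto. split; auto. intro; tauto.
  - intro c. split.
    + intros [hc hT]. split; auto. intros Z (x&a&b&Y&hx&hY&ha&hb&hYe&->).
      specialize (hT x hx). apply h2 in hT. destruct hT as [_ hT]. specialize (hT Y hY).
      apply hYe in hT. destruct hT as [_ hle]. split; auto. rewrite <- (U_mlA H). exact hle.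
    + intros [hc hZ]. split; auto. intros x hx. apply h2. split. apply inM_mul2; auto.
      intros Y hY. destruct (h1 Y hY) as (a&b&ha&hb&hYe). apply hYe. split. apply inM_mul2; auto.
      assert (hz := hZ (arr s B (ml s a x) b) (ex_intro _ x (ex_intro _ a (ex_intro _ b (ex_intro _ Y (conj hx (conj hY (conj ha (conj hb (conj hYe eq_refl)))))))))).
      destruct hz as [_ hle]. rewrite (U_mlA H); exact hle.
Qed.

Lemma meet_D {A} {s : ulsig A} {B : A -> Prop} X Y : inD s B X -> inD s B Y -> inD s B (meetD X Y).
Proof.
  intros (chi&h1&h2) (psi&g1&g2). exists (fun Z => chi Z \/ psi Z). split.
  intros Z [h|h]; auto.
  intro c. unfold meetD. split.
  - intros [ha hb]. apply h2 in ha. apply g2 in hb. destruct ha as [hc ha]. destruct hb as [_ hb].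
    split; auto. intros Z [h|h]; [apply ha|apply hb]; exact h.
  - intros [hc h]. split; [apply h2|apply g2]; split; auto; intros Z hZ; apply h; auto.
Qed.

Lemma D_chain {A} {s : ulsig A} {B : A -> Prop} (H : is_UL s) (Hlin : linear s) X Y :
  inD s B X -> inD s B Y -> sub X Y \/ sub Y X.
Proof.
  intros hX hY. destruct (classic (sub X Y)) as [h|h]; auto. right.
  apply not_all_ex_not in h. destruct h as [x hx]. apply imply_to_and in hx.
  destruct hx as [hxX hxY]. intros y hy. destruct (Hlin x y) as [l|l].
  - exfalso; apply hxY. eapply (D_down H); [exact hY|exact hy|exact (D_M _ _ hX hxX)|exact l].
  - eapply (D_down H); [exact hX|exact hxX|exact (D_M _ _ hY hy)|exact l].
Qed.

Lemma galois {A} {s : ulsig A} {B : A -> Prop} (H : is_UL s) X :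
  sub X (inM s B) -> sub X (simD s B (simD s B X)).
Proof.
  intros hX c hc. split; auto. intros d [hd hdx]. specialize (hdx c hc).
  rewrite (U_mlC H d c). exact hdx.
Qed.

Lemma anti {A} {s : ulsig A} {B : A -> Prop} X Y : sub X Y -> sub (simD s B Y) (simD s B X).
Proof. intros h c [hc h2]. split; auto. Qed.

Lemma ml_rot {A} {s : ulsig A} (H : is_UL s) x y z : ml s x (ml s y z) = ml s y (ml s z x).
Proof. rewrite (U_mlC H x). rewrite <- (U_mlA H). reflexivity. Qed.

Lemma arr_dn {A} {s : ulsig A} {B : A -> Prop} (H : is_IUL s) a b :
  inM s B a -> B b -> (forall b, B b -> B (neg s b)) ->
  sub (simD s B (simD s B (arr s B a b))) (arr s B a b).
Proof.
  destruct H as [HU [Hnn _]].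
  intros ha hb hneg c [hc h]. split; auto.
  assert (hd : inM s B (ml s (neg s b) a)) by (constructor; auto).
  assert (hdd : simD s B (arr s B a b) (ml s (neg s b) a)).
  { split; auto. intros x [hx hle]. split. apply inM_mul2; auto.
    rewrite (ml_rot HU). apply (U_res HU). replace (im s (neg s b) (uf s)) with b by (symmetry; exact (Hnn b)). exact hle. }
  destruct (h _ hdd) as [_ hle]. rewrite <- (U_mlA HU) in hle.
  apply (U_res HU) in hle. replace (im s (neg s b) (uf s)) with b in hle by (symmetry; exact (Hnn b)). exact hle.
Qed.

Lemma part_ii {A} {s : ulsig A} {B : A -> Prop} (H : is_IUL s) a b :
  inM s B a -> B b -> (forall b, B b -> B (neg s b)) ->
  seteq (arr s B a b) (simD s B (simD s B (arr s B a b))).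
Proof.
  intros ha hb hn c; split. apply galois. apply H. intros d [hd _]; auto.
  apply arr_dn; auto.
Qed.

Lemma down_arr {A} {s : ulsig A} {B : A -> Prop} (H : is_UL s) b :
  down s B b = arr s B (ue s) b.
Proof. apply sext. intro c. unfold down, arr. rewrite (U_mlE H). tauto. Qed.

Lemma down_D {A} {s : ulsig A} {B : A -> Prop} (H : is_UL s) b : B b -> inD s B (down s B b).
Proof.
  intro hb. rewrite (down_arr H). apply Dbar_D. exists (ue s), b. split. constructor.
  split; auto. intro; tauto.
Qed.

Lemma part_iii {A} {s : ulsig A} {B : A -> Prop} (H : is_IUL s) X :
  (forall b, B b -> B (neg s b)) -> inD s B X -> seteq X (simD s B (simD s B X)).
Proof.
  intros hn hX c; split. apply galois. apply H. intros d hd. eapply D_M; eauto.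
  intro hc. destruct hX as (chi&h1&h2). apply h2. split. destruct hc; auto.
  intros Y hY. destruct (h1 Y hY) as (a&b&ha&hb&hYe). apply sext in hYe. subst Y.
  apply arr_dn; auto. revert c hc. apply anti, anti. intros x hx. apply h2 in hx.
  apply hx; auto.
Qed.

Definition prod {A} (s : ulsig A) (W V : A -> Prop) : A -> Prop :=
  fun z => exists x y, W x /\ V y /\ z = ml s x y.

Lemma mulD_prod {A} {s : ulsig A} {B : A -> Prop} X Y : mulD s B X Y = Ccl s B (prod s X Y).
Proof. reflexivity. Qed.

Lemma monoL {A} {s : ulsig A} (H : is_UL s) z x y : le s x y -> le s (ml s x z) (ml s y z).
Proof. intro h. rewrite (U_mlC H x), (U_mlC H y). apply mono; auto. Qed.

Lemma join_absorb {A} {s : ulsig A} {B : A -> Prop} W V :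
  sub W (inM s B) -> sub V (inM s B) ->
  Ccl s B (fun z => Ccl s B W z \/ V z) = Ccl s B (fun z => W z \/ V z).
Proof.
  intros hW hV. apply sext; intro c; split.
  - apply Ccl_min. apply Ccl_D. intros z [h|h].
    + revert z h. apply Ccl_mono. intros x hx; left; auto.
    + apply Ccl_incl. intros x [hx|hx]; auto. right; auto.
  - apply Ccl_mono. intros z [h|h]; [left|right]; auto. apply Ccl_incl; auto.
Qed.

Lemma join_comm {A} {s : ulsig A} {B : A -> Prop} W V :
  Ccl s B (fun z => W z \/ V z) = Ccl s B (fun z => V z \/ W z).
Proof. f_equal. apply sext; intro; tauto. Qed.

Lemma prod_M {A} {s : ulsig A} {B : A -> Prop} (H : is_UL s) W V :
  sub W (inM s B) -> sub V (inM s B) -> sub (prod s W V) (inM s B).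
Proof. intros hW hV z (x&y&hx&hy&->). apply inM_mul2; auto. Qed.

Lemma Ccl_mul_r {A} {s : ulsig A} {B : A -> Prop} (H : is_UL s) W V :
  sub W (inM s B) -> sub V (inM s B) ->
  Ccl s B (prod s W (Ccl s B V)) = Ccl s B (prod s W V).
Proof.
  intros hW hV. apply sext; intro c; split.
  - apply Ccl_min. apply Ccl_D. intros z (x&y&hx&hy&->).
    assert (hs : sub (Ccl s B V) (impD s B W (Ccl s B (prod s W V)))).
    { apply Ccl_min. apply impD_D; auto. apply Ccl_D.
      intros y' hy'. split; auto. intros x' hx'. apply Ccl_incl. apply prod_M; auto.
      exists x', y'; auto. }
    apply hs in hy. destruct hy as [_ hy]. apply hy; auto.
  - apply Ccl_mono. intros z (x&y&hx&hy&->). exists x, y. split; auto. split; auto.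
    apply Ccl_incl; auto.
Qed.

Lemma prod_comm {A} {s : ulsig A} (H : is_UL s) W V : prod s W V = prod s V W.
Proof.
  apply sext; intro c; split; intros (x&y&hx&hy&->); exists y, x; repeat split; auto;
  apply (U_mlC H).
Qed.

Lemma prod_assoc {A} {s : ulsig A} (H : is_UL s) W V U :
  prod s W (prod s V U) = prod s (prod s W V) U.
Proof.
  apply sext; intro c; split.
  - intros (x&y&hx&(y1&y2&h1&h2&->)&->). exists (ml s x y1), y2. split. exists x, y1; auto.
    split; auto. apply (U_mlA H).
  - intros (x&y&(x1&x2&h1&h2&->)&hy&->). exists x1, (ml s x2 y). split; auto.
    split. exists x2, y; auto. symmetry; apply (U_mlA H).
Qed.

Lemma impD_Ccl {A} {s : ulsig A} {B : A -> Prop} (H : is_UL s) W Z :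
  inD s B Z -> sub W (inM s B) -> impD s B (Ccl s B W) Z = impD s B W Z.
Proof.
  intros hZ hW. apply sext; intro c; split.
  - intros [hc h]. split; auto. intros x hx. apply h. apply Ccl_incl; auto.
  - intros [hc h]. split; auto.
    assert (hs : sub (Ccl s B W) (impD s B (fun d => d = c) Z)).
    { apply Ccl_min. apply impD_D; auto. intros d ->; auto.
      intros w hw. split; auto. intros d ->. rewrite (U_mlC H). auto. }
    intros x hx. apply hs in hx. destruct hx as [_ hx]. rewrite (U_mlC H). apply hx; auto.
Qed.

Lemma resid_set {A} {s : ulsig A} {B : A -> Prop} (H : is_UL s) X Y Z :
  inD s B X -> inD s B Y -> inD s B Z ->
  (sub (Ccl s B (prod s X Y)) Z <-> sub Y (impD s B X Z)).
Proof.
  intros hX hY hZ. split.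
  - intros h y hy. split. exact (D_M _ _ hY hy). intros x hx. apply h. apply Ccl_incl.
    apply prod_M; auto; [intros d hd; exact (D_M _ _ hX hd)|intros d hd; exact (D_M _ _ hY hd)]. exists x, y; auto.
  - intro h. apply Ccl_min; auto. intros z (x&y&hx&hy&->). apply h in hy. destruct hy as [_ hy].
    auto.
Qed.

Lemma sub_bot {A} {s : ulsig A} {B : A -> Prop} (H : is_UL s) X :
  inD s B X -> sub (down s B (ub s)) X.
Proof.
  intros (chi&h1&h2) c [hc hle]. apply h2. split; auto. intros Y hY.
  destruct (h1 Y hY) as (a&b&ha&hb&hYe). apply hYe. split; auto.
  apply le_trans with (ml s a (ub s)); auto. apply mono; auto.
  apply (U_res H). apply le_bot; auto.
Qed.

Lemma lam_e {A} {s : ulsig A} {B : A -> Prop} (H : is_UL s) U W :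
  sub (down s B (ue s)) W -> sub U (inM s B) ->
  meetD (impD s B U (Ccl s B (prod s W U))) (down s B (ue s)) = down s B (ue s).
Proof.
  intros hW hU. apply sext; intro c; split.
  - intros [_ h]; auto.
  - intro h. split; auto. split. destruct h; auto. intros u hu.
    split. apply inM_mul2; auto. destruct h; auto.
    intros Y _ hs. apply hs. exists c, u. split; auto. split; auto. apply (U_mlC H).
Qed.

Lemma join_le {A} {s : ulsig A} {B : A -> Prop} X Y :
  inD s B Y -> sub X Y -> Ccl s B (fun z => X z \/ Y z) = Y.
Proof. intros hY h. apply Ccl_id; auto. intros z [hz|hz]; auto. intros z hz; right; auto. Qed.

Lemma join_ge {A} {s : ulsig A} {B : A -> Prop} X Y :
  inD s B X -> sub Y X -> Ccl s B (fun z => X z \/ Y z) = X.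
Proof. intros hY h. apply Ccl_id; auto. intros z [hz|hz]; auto. intros z hz; left; auto. Qed.

Lemma eYY {A} {s : ulsig A} {B : A -> Prop} (H : is_UL s) Y :
  inD s B Y -> sub (down s B (ue s)) (impD s B Y Y).
Proof.
  intros hY c [hc hle]. split; auto. intros y hy. eapply (D_down H); [exact hY|exact hy| |].
  apply inM_mul2; auto. exact (D_M _ _ hY hy).
  apply le_trans with (ml s y (ue s)); auto. apply mono; auto. rewrite (ml_e_r H). apply le_refl; auto.
Qed.

Lemma prel_set {A} {s : ulsig A} {B : A -> Prop} (H : is_UL s) (Hlin : linear s) (he : B (ue s)) X Y U V :
  inD s B X -> inD s B Y -> inD s B U -> inD s B V ->
  Ccl s B (fun z =>
    meetD (impD s B U (Ccl s B (prod s (impD s B (Ccl s B (fun z => X z \/ Y z)) X) U))) (down s B (ue s)) z \/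
    meetD (impD s B V (Ccl s B (prod s (impD s B (Ccl s B (fun z => X z \/ Y z)) Y) V))) (down s B (ue s)) z)
  = down s B (ue s).
Proof.
  intros hX hY hU hV.
  assert (hUM : sub U (inM s B)) by (intros d hd; exact (D_M _ _ hU hd)).
  assert (hVM : sub V (inM s B)) by (intros d hd; exact (D_M _ _ hV hd)).
  destruct (D_chain H Hlin _ _ hX hY) as [h|h].
  - rewrite (join_le _ _ hY h). rewrite (lam_e H V _ (eYY H _ hY) hVM).
    apply Ccl_id. apply down_D; auto. intros z [[_ hz]|hz]; auto. intros z hz; right; auto.
  - rewrite (join_ge _ _ hX h). rewrite (lam_e H U _ (eYY H _ hX) hUM).
    apply Ccl_id. apply down_D; auto. intros z [hz|[_ hz]]; auto. intros z hz; left; auto.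
Qed.

Lemma omega_set {A} {s : ulsig A} {B : A -> Prop} (H : is_IUL s) (Hlin : linear s) X :
  inD s B X -> impD s B X (down s B (ue s)) = impD s B (prod s X X) (down s B (ue s)).
Proof.
  destruct H as [HU [_ Hw]]. intros hX.
  assert (hXM : sub X (inM s B)) by (intros d hd; exact (D_M _ _ hX hd)).
  assert (key : forall y c, le s (ml s y c) (ue s) -> le s (ml s (ml s y y) c) (ue s)).
  { intros y c h. apply (U_res HU). rewrite <- Hw. apply (U_res HU). auto. }
  apply sext; intro c; split.
  - intros [hc h]. split; auto. intros z (x&y&hx&hy&->). split.
    apply inM_mul2; auto. apply inM_mul2; auto.
    destruct (Hlin x y) as [l|l].
    + apply le_trans with (ml s (ml s y y) c); auto. apply monoL; auto. apply monoL; auto.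
      apply key. apply (h y hy).
    + apply le_trans with (ml s (ml s x x) c); auto. apply monoL; auto. apply mono; auto.
      apply key. apply (h x hx).
  - intros [hc h]. split; auto. intros x hx.
    destruct (h (ml s x x)) as [_ h2]. exists x, x; auto. split. apply inM_mul2; auto.
    apply (U_res HU). rewrite Hw. apply (U_res HU). auto.
Qed.

Definition sDef {A} {s : ulsig A} {B : A -> Prop} (H : is_UL s) (he : B (ue s)) (hf : B (uf s))
  (hb : B (ub s)) (ht : B (ut s)) : ulsig (Dty s B) :=
  ULSig (fun X Y => exist _ (meetD (proj1_sig X) (proj1_sig Y)) (meet_D _ _ (proj2_sig X) (proj2_sig Y)))
        (fun X Y => exist _ (joinD s B (proj1_sig X) (proj1_sig Y)) (Ccl_D _))
        (fun X Y => exist _ (mulD s B (proj1_sig X) (proj1_sig Y)) (Ccl_D _))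
        (fun X Y => exist _ (impD s B (proj1_sig X) (proj1_sig Y))
                      (impD_D H _ _ (fun c hc => D_M _ _ (proj2_sig X) hc) (proj2_sig Y)))
        (exist _ (eD s B) (down_D H _ he)) (exist _ (fD s B) (down_D H _ hf))
        (exist _ (botD s B) (down_D H _ hb)) (exist _ (topD s B) (down_D H _ ht)).

Lemma Deq {A} {s : ulsig A} {B : A -> Prop} (X Y : Dty s B) : proj1_sig X = proj1_sig Y -> X = Y.
Proof. destruct X as [X hX], Y as [Y hY]. simpl. intros ->. f_equal. apply proof_irrelevance. Qed.

Lemma leD {A} {s : ulsig A} {B : A -> Prop} (H : is_UL s) he hf hb ht (X Y : Dty s B) :
  le (sDef H he hf hb ht) X Y <-> sub (proj1_sig X) (proj1_sig Y).
Proof.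
  unfold le. split.
  - intros h c hc. assert (E := f_equal (fun Z => proj1_sig Z c) h). simpl in E.
    rewrite <- E in hc. destruct hc; auto.
  - intro h. apply Deq. simpl. apply sext; intro c. unfold meetD. split; [tauto|].
    intro hc; split; auto.
Qed.

Lemma sDef_IUL {A} {s : ulsig A} {B : A -> Prop} (H : is_IUL s) (Hlin : linear s)
  (he : B (ue s)) (hf : B (uf s)) (hb : B (ub s)) (ht : B (ut s)) (hn : forall b, B b -> B (neg s b)) :
  is_IUL (sDef (proj1 H) he hf hb ht).
Proof.
  pose proof (proj1 H) as HU.
  assert (DM : forall X : A -> Prop, inD s B X -> sub X (inM s B)) by (intros X hX d hd; exact (D_M _ _ hX hd)).
  split; [split|split].
  - intros [X hX] [Y hY] [Z hZ]. apply Deq. simpl. apply sext; intro c; unfold meetD; tauto.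
  - split.
  { intros [X hX] [Y hY] [Z hZ]. apply Deq. simpl. unfold joinD.
    rewrite (join_comm X). rewrite join_absorb; auto.
    rewrite join_absorb; auto. f_equal. apply sext; intro; tauto.
    all: intros z [h|h]; first [exact (DM _ hX _ h) | exact (DM _ hY _ h) | exact (DM _ hZ _ h)]. }
  split.
  { intros [X hX] [Y hY]. apply Deq. simpl. apply sext; intro c; unfold meetD; tauto. }
  split.
  { intros [X hX] [Y hY]. apply Deq. simpl. apply join_comm. }
  split.
  { intros [X hX] [Y hY]. apply Deq. simpl. apply sext; intro c; unfold meetD; split.
    intros [h _]; auto. intro h; split; auto. apply Ccl_incl; auto.
    intros z [h1|h1]; [exact (DM _ hX _ h1)|exact (DM _ hY _ h1)]. }
  split.
  { intros [X hX] [Y hY]. apply Deq. simpl. unfold joinD. apply Ccl_id; auto.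
    intros z [h|[h _]]; auto. intros z h; left; auto. }
  split.
  { intros [X hX]. apply Deq. simpl. unfold joinD. apply Ccl_id; auto.
    intros z [h|h]; auto. apply (sub_bot HU _ hX); auto. intros z h; right; auto. }
  split.
  { intros [X hX]. apply Deq. simpl. apply sext; intro c; unfold meetD; split.
    intros [_ h]; auto. intro h; split; auto. split. exact (DM _ hX _ h). apply le_top; auto. }
  split.
  { intros [X hX] [Y hY] [Z hZ]. apply Deq. simpl. rewrite !mulD_prod.
    rewrite (Ccl_mul_r HU); auto. rewrite (prod_assoc HU).
    rewrite (prod_comm HU _ Z). rewrite <- (Ccl_mul_r HU); auto.
    rewrite (prod_comm HU Z). reflexivity.
    apply prod_M; auto. apply prod_M; auto. }
  split.
  { intros [X hX] [Y hY]. apply Deq. simpl. rewrite !mulD_prod. rewrite (prod_comm HU). reflexivity. }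
  split.
  { intros [X hX]. apply Deq. simpl. rewrite mulD_prod. apply Ccl_id; auto.
    - intros z (c&x&[hc hle]&hx&->). eapply (D_down HU); [exact hX|exact hx| |].
      apply inM_mul2; auto. exact (DM _ hX _ hx).
      apply le_trans with (ml s (ue s) x); auto. apply monoL; auto. rewrite (U_mlE HU). apply le_refl; auto.
    - intros x hx. exists (ue s), x. split. split. constructor. apply le_refl; auto.
      split; auto. symmetry; apply (U_mlE HU). }
  split.
  { intros X Y Z. rewrite !(leD (proj1 H)). destruct X as [X hX], Y as [Y hY], Z as [Z hZ]. simpl.
    rewrite mulD_prod. apply resid_set; auto. }
  { intros [X hX] [Y hY] [U hU] [V hV]. apply Deq. simpl. apply prel_set; auto. }
  - intros [X hX]. apply Deq. simpl. symmetry. apply sext. apply part_iii; auto.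
  - intros [X hX]. apply Deq. simpl. unfold mulD. rewrite (impD_Ccl HU); auto.
    apply omega_set; auto. apply down_D; auto. apply prod_M; auto.
Qed.

Theorem lemma3p9 (A : Type) (s : ulsig A) (B : A -> Prop)
  (HIUL : is_IUL s) (Hlin : linear s)
  (HBe : B (ue s)) (HBf : B (uf s)) (HBb : B (ub s)) (HBt : B (ut s))
  (HBneg : forall b, B b -> B (neg s b)) :
  (* (i) *)
  (forall b, B b -> seteq (down s B b) (simD s B (simD s B (down s B b)))) /\
  (* (ii) *)
  (forall a b, inM s B a -> B b ->
     seteq (arr s B a b) (simD s B (simD s B (arr s B a b)))) /\
  (* (iii) *)
  (forall X, inD s B X -> seteq X (simD s B (simD s B X))) /\
  (* (iv) *)
  (exists sD : ulsig (Dty s B),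
     (forall X Y : Dty s B,
        seteq (proj1_sig (mt sD X Y)) (meetD (proj1_sig X) (proj1_sig Y))) /\
     (forall X Y : Dty s B,
        seteq (proj1_sig (jn sD X Y)) (joinD s B (proj1_sig X) (proj1_sig Y))) /\
     (forall X Y : Dty s B,
        seteq (proj1_sig (ml sD X Y)) (mulD s B (proj1_sig X) (proj1_sig Y))) /\
     (forall X Y : Dty s B,
        seteq (proj1_sig (im sD X Y)) (impD s B (proj1_sig X) (proj1_sig Y))) /\
     seteq (proj1_sig (ue sD)) (eD s B) /\
     seteq (proj1_sig (uf sD)) (fD s B) /\
     seteq (proj1_sig (ub sD)) (botD s B) /\
     seteq (proj1_sig (ut sD)) (topD s B) /\
     is_IUL sD).
Proof.
  pose proof (proj1 HIUL) as HU.
  assert (hii : forall a b, inM s B a -> B b ->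
            seteq (arr s B a b) (simD s B (simD s B (arr s B a b))))
    by (intros; apply part_ii; auto).
  split; [|split; [|split]].
  - intros b hb. rewrite (down_arr HU). apply hii; auto. constructor.
  - exact hii.
  - intros X hX. apply part_iii; auto.
  - exists (sDef (proj1 HIUL) HBe HBf HBb HBt).
    split; [intros X Y c; simpl; tauto|].
    split; [intros X Y c; simpl; tauto|].
    split; [intros X Y c; simpl; tauto|].
    split; [intros X Y c; simpl; tauto|].
    split; [intro c; simpl; tauto|].
    split; [intro c; simpl; tauto|].
    split; [intro c; simpl; tauto|].
    split; [intro c; simpl; tauto|].
    apply sDef_IUL; auto.
Qed.
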